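(* Let $G$ be a finite simple connected graph of order $n$ and let $k\ge 2$ be an integer with $k\le n$. Then $W_{tsp,k}(G)\le 2W_k(G)$. Moreover, equality $W_{tsp,k}(G)=2W_k(G)$ holds if and only if one of the following holds: (i) $k=2$; (ii) $k=3$ and $G$ contains no three vertices $u,v,w$ such that $2\max\{d(u,v),d(u,w),d(v,w)\}<d(u,v)+d(u,w)+d(v,w)$ and every choice of three shortest paths between the three pairs $(u,v),(v,w),(w,u)$ consists of pairwise edge-disjoint paths; (iii) $k\ge 4$ and $G$ is a tree.
   Context: For vertices $u,v$, $d(u,v)$ is the graph distance. A walk is a sequence of vertices $(v_1,\dots,v_r)$ with $v_iv_{i+1}\in E(G)$; it is closed if $v_1=v_r$; its length is $r-1$ (the number of edge traversals, counted with multiplicity). For a set $S$ of $k$ vertices, $\mathrm{tsp}_k(S)$ is the length of a shortest closed walk in $G$ visiting all vertices of $S$, and the $k$-TSP-Wiener index is $W_{tsp,k}(G)=\sum_{S\subseteq V,\,|S|=k}\mathrm{tsp}_k(S)$. The Steiner distance $d_k(S)$ is the minimum number of edges of a connected subgraph (equivalently, a subtree) of $G$ containing all vertices of $S$, and the Steiner-Wiener index is $W_k(G)=\sum_{S\subseteq V,\,|S|=k}d_k(S)$. *)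

(* Defs.v *)
From mathcomp Require Import all_boot.
Set Implicit Arguments. Unset Strict Implicit. Unset Printing Implicit Defensive.

Section Graphs.
Variables (T : finType) (e : rel T).

Definition simple_graph : Prop := symmetric e /\ irreflexive e.
Definition connected_graph : Prop := forall x y : T, connect e x y.

(* least m < B satisfying P (B if none) *)
Definition nat_min (P : pred nat) (B : nat) : nat := find P (iota 0 B).

(* a walk (v_1,...,v_r) is represented as x :: p with path e x p;
   its length is size p. *)

(* graph distance: shortest walk from x to y (at most #|T|-1 in a connected graph) *)
Definition has_walk_len (x y : T) (m : nat) : bool :=
  [exists p : m.-tuple T, path e x p && (last x p == y)].
Definition dist (x y : T) : nat := nat_min (has_walk_len x y) #|T|.

Definition shortest_path (x y : T) (p : seq T) : Prop :=
  [/\ path e x p, last x p = y & size p = dist x y].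

Definition walk_edges (x : T) (p : seq T) : {set {set T}} :=
  [set [set a.1; a.2] | a in zip (x :: p) p].

Definition has_tsp_walk (S : {set T}) (m : nat) : bool :=
  [exists x : T, exists p : m.-tuple T,
     [&& path e x p, last x p == x & [forall v in S, v \in x :: p]]].
(* tsp_k(S): length of a shortest closed walk visiting S.  In a connected
   graph a closed walk of length <= 2(#|T|-1) visits every vertex, so the
   bound 2*#|T| does not cut off the minimum. *)
Definition tsp (S : {set T}) : nat := nat_min (has_tsp_walk S) (#|T|.*2).

Definition conn_subgraph_containing (S U : {set T}) (F : {set {set T}}) : bool :=
  [&& S \subset U,
      [forall f in F, exists x, exists y, [&& f == [set x; y], e x y, x \in U & y \in U]] &
      [forall x in U, forall y in U, connect (fun a b => [set a; b] \in F) x y]].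
Definition has_steiner_tree (S : {set T}) (m : nat) : bool :=
  [exists U : {set T}, exists F : {set {set T}},
     conn_subgraph_containing S U F && (#|F| == m)].
(* Steiner distance d_k(S): least number of edges of a connected subgraph
   containing S (the bound exceeds every possible number of edges). *)
Definition steiner (S : {set T}) : nat :=
  nat_min (has_steiner_tree S) (#|{set T}|.+1).

Definition tsp_wiener (k : nat) : nat := \sum_(S : {set T} | #|S| == k) tsp S.
Definition steiner_wiener (k : nat) : nat := \sum_(S : {set T} | #|S| == k) steiner S.

Definition is_tree : Prop :=
  connected_graph /\ forall c : seq T, 3 <= size c -> ~~ (cycle e c && uniq c).

Definition bad_triple (u v w : T) : Prop :=
  2 * maxn (dist u v) (maxn (dist u w) (dist v w)) < dist u v + dist u w + dist v w /\
  forall p1 p2 p3 : seq T,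
    shortest_path u v p1 -> shortest_path v w p2 -> shortest_path w u p3 ->
    [/\ [disjoint walk_edges u p1 & walk_edges v p2],
        [disjoint walk_edges v p2 & walk_edges w p3] &
        [disjoint walk_edges u p1 & walk_edges w p3]].

End Graphs.

(* Main.v *)
Require Import Defs.
From mathcomp Require Import all_boot.
From mathcomp Require Import zify.
From Stdlib Require Import Classical.
Set Implicit Arguments. Unset Strict Implicit. Unset Printing Implicit Defensive.

Lemma nat_min_le (P : pred nat) B m : P m -> nat_min P B <= m.
Proof.
move=> Pm; rewrite /nat_min; case: (leqP B m) => hB.
  by apply: leq_trans (find_size _ _) _; rewrite size_iota.
rewrite leqNgt; apply/negP => /(before_find 0).
by rewrite nth_iota // add0n Pm.
Qed.

Lemma nat_min_spec (P : pred nat) B : nat_min P B < B -> P (nat_min P B).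
Proof.
rewrite /nat_min => h.
have hh : has P (iota 0 B) by rewrite has_find size_iota.
by have := nth_find 0 hh; rewrite nth_iota // add0n.
Qed.

Lemma nat_min_leB (P : pred nat) B : nat_min P B <= B.
Proof. by rewrite /nat_min; apply: leq_trans (find_size _ _) _; rewrite size_iota. Qed.

Section G.
Variables (T : finType) (e : rel T).
Hypothesis esym : symmetric e.
Hypothesis eirr : irreflexive e.
Hypothesis econn : connected_graph e.

Local Notation d := (dist e).
Implicit Types (x y z u v w : T) (p q : seq T).

Lemma has_walk_lenP x y m :
  reflect (exists p : seq T, [/\ path e x p, last x p = y & size p = m]) (has_walk_len e x y m).
Proof.
apply: (iffP existsP).
  by case=> t /andP[h1 /eqP h2]; exists (val t); rewrite size_tuple.
case=> p [h1 h2 h3]; exists (@Tuple m T p (introT eqP h3)) => /=.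
by rewrite h1 h2 eqxx.
Qed.

Lemma dist_le x p : path e x p -> d x (last x p) <= size p.
Proof. move=> hp; apply: nat_min_le; apply/has_walk_lenP; by exists p. Qed.

Lemma dist_le' x y p : path e x p -> last x p = y -> d x y <= size p.
Proof. by move=> hp <-; exact: dist_le. Qed.

Lemma uniq_path_exists x y : exists p : seq T, [/\ path e x p, last x p = y & uniq (x :: p)].
Proof.
have := econn x y => /connectP[p hp ->].
case: (shortenP hp) => p' h1 h2 _; by exists p'.
Qed.

Lemma size_uniq_lt x p : uniq (x :: p) -> size p < #|T|.
Proof.
move=> u; have := card_uniqP u => /= h.
have : #|x :: p| <= #|T| by apply: max_card.
by rewrite h.
Qed.

Lemma dist_lt x y : d x y < #|T|.
Proof.
have [p [h1 h2 h3]] := uniq_path_exists x y.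
apply: leq_ltn_trans (dist_le' h1 h2) (size_uniq_lt h3).
Qed.

Lemma dist_attained x y : exists p : seq T, [/\ path e x p, last x p = y & size p = d x y].
Proof. by apply/has_walk_lenP; apply: nat_min_spec; exact: dist_lt. Qed.

Lemma dist_xx x : d x x = 0.
Proof. by apply/eqP; rewrite -leqn0; apply: (@dist_le' x x [::]). Qed.

Lemma dist_edge x y : e x y -> d x y <= 1.
Proof. by move=> h; apply: (@dist_le' x y [:: y]) => //=; rewrite h. Qed.

Lemma dist_tri x y z : d x z <= d x y + d y z.
Proof.
have [p [h1 h2 h3]] := dist_attained x y.
have [q [k1 k2 k3]] := dist_attained y z.
rewrite -h3 -k3 -size_cat; apply: dist_le'.
  by rewrite cat_path h1 h2 k1.
by rewrite last_cat h2 k2.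
Qed.

Lemma rev_walk x p : path e x p ->
  path e (last x p) (rev (belast x p)) /\ last (last x p) (rev (belast x p)) = x.
Proof.
move=> hp; split.
  by rewrite rev_path; apply: sub_path hp => a b; rewrite /= esym.
case: p hp => //= y p _.
by rewrite rev_cons last_rcons.
Qed.

Lemma size_rev_belast x p : size (rev (belast x p)) = size p.
Proof. by rewrite size_rev size_belast. Qed.

Lemma dist_sym x y : d x y = d y x.
Proof.
wlog suff: x y / d y x <= d x y.
  by move=> h; apply/eqP; rewrite eqn_leq !h.
have [p [h1 h2 h3]] := dist_attained x y.
have [r1 r2] := rev_walk h1.
rewrite -h3 -(size_rev_belast x p); move: r1 r2; rewrite h2 => r1 r2.
exact: dist_le' r1 r2.
Qed.

Lemma dist0 x y : d x y = 0 -> x = y.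
Proof.
move=> h; have [p [h1 h2 h3]] := dist_attained x y.
by case: p h1 h2 h3 => //=; rewrite h.
Qed.


Local Notation we := (walk_edges (T:=T)).
Definition rF (F : {set {set T}}) : rel T := fun a b => [set a; b] \in F.

Lemma we_nil x : we x [::] = set0.
Proof. by apply/setP => f; rewrite inE; apply/imsetP => -[a]. Qed.

Lemma we_cons x y p : we x (y :: p) = [set x; y] |: we y p.
Proof.
apply/setP => f; rewrite /walk_edges /= !inE; apply/imsetP/idP.
  case=> a; rewrite inE => /orP[/eqP -> -> | ha ->]; first by rewrite eqxx.
  by apply/orP; right; apply/imsetP; exists a.
case/orP => [/eqP -> | /imsetP[a ha ->]]; first by exists (x, y); rewrite ?inE ?eqxx.
by exists a => //; rewrite inE ha orbT.
Qed.

Lemma we_cat x p q : we x (p ++ q) = we x p :|: we (last x p) q.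
Proof.
elim: p x => [|y p IH] x /=; first by rewrite we_nil set0U.
by rewrite !we_cons IH setUA.
Qed.

Lemma set2C' (a b : T) : [set a; b] = [set b; a].
Proof. by rewrite setUC. Qed.

Lemma last_rev_belast x p : last (last x p) (rev (belast x p)) = x.
Proof. by case: p => //= y p; rewrite rev_cons last_rcons. Qed.

Lemma we_rev x p : we (last x p) (rev (belast x p)) = we x p.
Proof.
elim: p x => [|y p IH] x /=; first by [].
rewrite rev_cons -cats1 we_cat IH last_rev_belast we_cons we_cons we_nil setU0.
by rewrite setUC set2C'.
Qed.

Lemma mem_we x p f : f \in we x p ->
  exists p1 b p2, p = p1 ++ b :: p2 /\ f = [set last x p1; b].
Proof.
elim: p x => [|y p IH] x; first by rewrite we_nil inE.
rewrite we_cons => /setU1P[-> | /IH[p1 [b [p2 [-> ->]]]]].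
  by exists [::], y, p.
by exists (y :: p1), b, p2.
Qed.

Lemma we_mem x p1 b p2 : [set last x p1; b] \in we x (p1 ++ b :: p2).
Proof. by rewrite we_cat we_cons !inE eqxx orbT. Qed.

Lemma we_sub x p f : f \in we x p -> forall z, z \in f -> z \in x :: p.
Proof.
case/mem_we => p1 [b [p2 [-> ->]]] z /set2P[->|->].
  case: p1 => [|y p1] /=; first by rewrite inE eqxx.
  have h := mem_last y p1; rewrite in_cons in h.
  by rewrite !in_cons mem_cat; case/orP: h => ->; rewrite ?orbT.
by rewrite in_cons mem_cat in_cons eqxx !orbT.
Qed.

Lemma we_edge x p f : path e x p -> f \in we x p ->
  exists a b, [/\ f = [set a; b], e a b, a \in x :: p & b \in x :: p].
Proof.
move=> hp hf; have := we_sub hf => hs.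
case/mem_we: hf hp hs => p1 [b [p2 [-> ->]]].
rewrite cat_path /= => /and3P[_ hab _] hs.
exists (last x p1), b; split => //; apply: hs; by rewrite !inE eqxx ?orbT.
Qed.

Lemma card_we x p : #|we x p| <= size p.
Proof.
elim: p x => [|y p IH] x; first by rewrite we_nil cards0.
rewrite we_cons cardsU1 /=; have := IH y; case: (_ \notin _) => /=; lia.
Qed.

Lemma card_we_uniq x p : uniq (x :: p) -> #|we x p| = size p.
Proof.
elim: p x => [|y p IH] x; first by rewrite we_nil cards0.
move=> /= /andP[hx hu]; rewrite we_cons cardsU1 IH //.
suff -> : [set x; y] \notin we y p by [].
apply/negP => /we_sub /(_ x) h; apply: (negP hx); apply: h; by rewrite !inE eqxx.
Qed.

Lemma rF_sym F : symmetric (rF F).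
Proof. by move=> a b; rewrite /rF set2C'. Qed.

Lemma we_connect x p z : z \in x :: p -> connect (rF (we x p)) x z.
Proof.
elim: p x => [|y p IH] x; first by rewrite inE => /eqP ->; exact: connect0.
rewrite inE => /orP[/eqP -> | hz]; first exact: connect0.
apply: (@connect_trans _ _ y).
  by apply: connect1; rewrite /rF we_cons !inE eqxx.
apply: connect_sub (IH _ hz) => a b hab; apply: connect1.
by move: hab; rewrite /rF we_cons inE => ->; rewrite orbT.
Qed.

Lemma conn_walk (S : {set T}) x p : path e x p -> S \subset [set z | z \in x :: p] ->
  conn_subgraph_containing e S [set z | z \in x :: p] (we x p).
Proof.
move=> hp hS; apply/and3P; split => //.
  apply/forallP => f; apply/implyP => hf.
  have [a [b [-> hab ha hb]]] := we_edge hp hf.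
  by apply/existsP; exists a; apply/existsP; exists b; rewrite eqxx hab !in_set ha hb.
apply/forallP => a; apply/implyP; rewrite in_set => ha.
apply/forallP => b; apply/implyP; rewrite in_set => hb.
have sc := sym_connect_sym (rF_sym (we x p)).
apply: (@connect_trans _ _ x); last exact: we_connect.
by rewrite sc; exact: we_connect.
Qed.

Lemma steiner_le (S U : {set T}) F : conn_subgraph_containing e S U F -> steiner e S <= #|F|.
Proof.
move=> h; apply: nat_min_le; apply/existsP; exists U; apply/existsP; exists F.
by rewrite h eqxx.
Qed.

Lemma steiner_walk (S : {set T}) x p : path e x p -> {subset S <= x :: p} -> steiner e S <= #|we x p|.
Proof.
move=> hp hS; apply: steiner_le; apply: conn_walk => //.
by apply/subsetP => z /hS; rewrite in_set.
Qed.


Lemma set2_eq (a b c d : T) : [set a; b] = [set c; d] ->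
  (a = c /\ b = d) \/ (a = d /\ b = c).
Proof.
move=> h.
have ha : a \in [set c; d] by rewrite -h !inE eqxx.
have hb : b \in [set c; d] by rewrite -h !inE eqxx orbT.
have hc : c \in [set a; b] by rewrite h !inE eqxx.
have hd : d \in [set a; b] by rewrite h !inE eqxx orbT.
case/set2P: ha => ea; case/set2P: hb => eb; subst a b.
- by move: hd; rewrite !inE orbb => /eqP ->; left.
- by left.
- by right.
- by move: hc; rewrite !inE orbb => /eqP ->; left.
Qed.

Lemma crossing (r : rel T) (V : {set T}) x q : path r x q -> x \in V -> last x q \notin V ->
  exists a b, [/\ r a b, a \in V, b \notin V & b \in q].
Proof.
elim: q x => [|y q IH] x /=; first by move=> _ ->.
case/andP=> hxy hq hx hl; case hy: (y \in V).
  by have [a [b [h1 h2 h3 h4]]] := IH y hq hy hl; exists a, b; rewrite inE h4 orbT.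
by exists x, y; rewrite hy inE eqxx.
Qed.

Lemma insert_walk (r : rel T) x p a b : path r x p -> last x p = x -> a \in x :: p ->
  r a b -> r b a -> exists p', [/\ path r x p', last x p' = x, size p' = (size p).+2 &
    [set z | z \in x :: p'] = b |: [set z | z \in x :: p]].
Proof.
move=> hp hl ha hab hba; case/splitPl: ha hp hl => p1 p2 hl1.
rewrite cat_path last_cat hl1 => /andP[h1 h2] hl.
exists (p1 ++ b :: a :: p2); split.
- by rewrite cat_path h1 hl1 /= hab hba h2.
- by rewrite last_cat hl1.
- by rewrite !size_cat /= addnS addnS.
apply/setP => z; rewrite !inE !mem_cat !inE.
have ha : (z == a) -> (z == x) || (z \in p1).
  move/eqP => ->; rewrite -hl1; have := mem_last x p1; by rewrite inE.
case: (z == b); rewrite ?orbT //=.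
by case hz: (z == a); rewrite ?orbT //=; move: (ha hz) => /orP[->|->]; rewrite ?orbT.
Qed.

Lemma grow (r : rel T) (rsym : symmetric r) x p0 : path r x p0 -> last x p0 = x ->
  forall t, #|[set z | z \in x :: p0]| + t <= #|[set y | connect r x y]| ->
  exists p, [/\ path r x p, last x p = x,
     [set z | z \in x :: p0] \subset [set z | z \in x :: p],
     #|[set z | z \in x :: p]| = #|[set z | z \in x :: p0]| + t &
     size p = size p0 + 2 * t].
Proof.
move=> hp0 hl0; elim=> [|t IH] ht.
  by exists p0; rewrite subxx !addn0.
have ht' : #|[set z | z \in x :: p0]| + t <= #|[set y | connect r x y]|.
  by apply: leq_trans ht; rewrite addnS.
have [p [h1 h2 h3 h4 h5]] := IH ht'.
set V := [set z | z \in x :: p] in h3 h4 *.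
have VR : V \subset [set y | connect r x y].
  by apply/subsetP => z; rewrite !inE => hz; apply: path_connect h1 _ hz.
have [b hbR hbV] : exists2 b, b \in [set y | connect r x y] & b \notin V.
  apply/exists_inP; rewrite -negb_forall_in; apply/negP => /forall_inP hall.
  have : [set y | connect r x y] \subset V by apply/subsetP => z /hall.
  move/subset_leq_card; rewrite h4; move: ht; rewrite addnS; lia.
move: hbR; rewrite inE => /connectP[q hq hlq].
have hxV : x \in V by rewrite inE mem_head.
have hlq' : last x q \notin V by rewrite -hlq.
have [a [b' [hab haV hbV' _]]] := crossing hq hxV hlq'.
move: haV; rewrite inE => haV.
have hba : r b' a by rewrite rsym.
have [p' [k1 k2 k3 k4]] := insert_walk h1 h2 haV hab hba.
exists p'; split => //.
- by rewrite k4; apply: subset_trans h3 (subsetUr _ _).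
- by rewrite k4 cardsU1 hbV' h4 addnS.
- by rewrite k3 h5 mulnS addnCA add2n.
Qed.

Lemma card_comp (F : {set {set T}}) x :
  #|[set y | connect (rF F) x y]| <= #|F| + 1.
Proof.
set R := [set y | connect (rF F) x y].
suff: forall t, t < #|R| -> exists (V : {set T}) (E : {set {set T}}), [/\ V \subset R, E \subset F, #|V| = t.+1,
   #|E| = t & x \in V /\ forall f, f \in E -> f \subset V].
  have hR : 0 < #|R| by rewrite card_gt0; apply/set0Pn; exists x; rewrite inE connect0.
  move/(_ (#|R|.-1)); rewrite prednK // => /(_ (leqnn _)).
  case=> V [E [_ hE hV hEc _]]; have := subset_leq_card hE; rewrite hEc.
  move: hR; lia.
elim=> [|t IH] ht.
  exists [set x], set0; rewrite sub0set cards1 cards0 inE eqxx; split => //.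
    by apply/subsetP => z; rewrite !inE => /eqP ->; exact: connect0.
  by split => // f; rewrite inE.
have [V [E [h1 h2 h3 h4 [h5 h6]]]] := IH (ltnW ht).
have [b hbR hbV] : exists2 b, b \in R & b \notin V.
  apply/exists_inP; rewrite -negb_forall_in; apply/negP => /forall_inP hall.
  have : R \subset V by apply/subsetP => z /hall.
  move/subset_leq_card; rewrite h3; move: ht; lia.
move: hbR; rewrite inE => /connectP[q hq hlq].
have hlq' : last x q \notin V by rewrite -hlq.
have [a [b' [hab haV hbV' hbq]]] := crossing hq h5 hlq'.
exists (b' |: V), ([set a; b'] |: E); split.
- rewrite subUset h1 andbT sub1set inE.
  by apply: (path_connect hq); rewrite inE hbq orbT.
- by rewrite subUset h2 andbT sub1set.
- by rewrite cardsU1 hbV' h3.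
- rewrite cardsU1 h4; suff -> : [set a; b'] \notin E by [].
  apply/negP => /h6 /subsetP /(_ b'); rewrite !inE eqxx orbT => /(_ isT).
  by apply/negP.
- split; first by rewrite inE h5 orbT.
  move=> f /setU1P[-> | /h6 hf].
    by apply/subsetP => z; rewrite !inE => /orP[/eqP->|->]; rewrite ?haV ?eqxx ?orbT.
  by apply: subset_trans hf (subsetUr _ _).
Qed.


Lemma has_tsp_walkP (S : {set T}) m :
  reflect (exists x p, [/\ path e x p, last x p = x, {subset S <= x :: p} & size p = m])
          (has_tsp_walk e S m).
Proof.
apply: (iffP existsP).
  case=> x /existsP[t /and3P[h1 /eqP h2 /forall_inP h3]].
  by exists x, (val t); split => //; rewrite size_tuple.
case=> x [p [h1 h2 h3 h4]]; exists x; apply/existsP.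
exists (@Tuple m T p (introT eqP h4)) => /=.
by rewrite h1 h2 eqxx /=; apply/forall_inP.
Qed.

Lemma tsp_walk (S : {set T}) x p : path e x p -> last x p = x -> {subset S <= x :: p} ->
  tsp e S <= size p.
Proof. by move=> h1 h2 h3; apply: nat_min_le; apply/has_tsp_walkP; exists x, p. Qed.

Lemma esym' : symmetric e. Proof. exact: esym. Qed.

Lemma span_walk x : exists p, [/\ path e x p, last x p = x, (forall z, z \in x :: p) &
  size p = 2 * (#|T|.-1)].
Proof.
have R : [set y | connect e x y] = setT by apply/setP => y; rewrite !inE econn.
have c1 : #|[set z | z \in [:: x]]| = 1.
  by rewrite (_ : [set z | z \in [:: x]] = [set x]) ?cards1 //; apply/setP => z; rewrite !inE.
have hT : 0 < #|T| by apply/card_gt0P; exists x.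
have ht : #|[set z | z \in [:: x]]| + #|T|.-1 <= #|[set y | connect e x y]|.
  by rewrite R cardsT c1; lia.
have [p [h1 h2 h3 h4 h5]] := grow esym (p0 := [::]) (x := x) isT erefl ht.
exists p; split => //.
move=> z; have : [set z | z \in x :: p] = setT.
  by apply/eqP; rewrite eqEcard subsetT cardsT h4 c1; lia.
by move/setP/(_ z); rewrite !inE.
Qed.

Lemma tsp_lt (S : {set T}) x : tsp e S < #|T|.*2.
Proof.
have [p [h1 h2 h3 h4]] := span_walk x.
have := tsp_walk (S := S) h1 h2 (fun z _ => h3 z); rewrite h4.
have hT : 0 < #|T| by apply/card_gt0P; exists x.
move=> h; rewrite -muln2; lia.
Qed.

Lemma tsp_attained (S : {set T}) x0 : exists x p,
  [/\ path e x p, last x p = x, {subset S <= x :: p} & size p = tsp e S].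
Proof. by apply/has_tsp_walkP; apply: nat_min_spec; exact: tsp_lt x0. Qed.

Definition Fall : {set {set T}} := [set [set a.1; a.2] | a in [pred a : T * T | e a.1 a.2]].

Lemma steiner_attained (S : {set T}) : exists U F,
  conn_subgraph_containing e S U F /\ #|F| = steiner e S.
Proof.
have h : has_steiner_tree e S (steiner e S).
  apply: nat_min_spec; apply: (@leq_ltn_trans #|Fall|); last by rewrite ltnS max_card.
  apply: nat_min_le; apply/existsP; exists setT; apply/existsP; exists Fall.
  rewrite eqxx andbT; apply/and3P; split; first exact: subsetT.
    apply/forall_inP => f /imsetP[[a b] hab ->].
    by apply/existsP; exists a; apply/existsP; exists b; rewrite eqxx !inE; rewrite inE in hab; rewrite hab.
  apply/forall_inP => a _; apply/forall_inP => b _.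
  apply: connect_sub (econn a b) => u v huv; apply: connect1.
  by apply/imsetP; exists (u, v).
case/existsP: h => U /existsP[F /andP[h1 /eqP h2]]; by exists U, F.
Qed.

Lemma rF_e (S U : {set T}) F : conn_subgraph_containing e S U F ->
  forall a b, rF F a b -> e a b /\ (a \in U /\ b \in U).
Proof.
case/and3P=> _ /forall_inP hF _ a b /hF /existsP[c /existsP[d]].
case/and4P=> /eqP h1 h2 h3 h4.
by case: (set2_eq h1) => -[-> ->]; rewrite h3 h4 ?h2 // esym.
Qed.

Lemma tsp_le_steiner (S : {set T}) x : x \in S -> tsp e S <= 2 * steiner e S.
Proof.
move=> hx; have [U [F [hcs hF]]] := steiner_attained S.
have hxU : x \in U by case/and3P: hcs => /subsetP /(_ x hx).
set R := [set y | connect (rF F) x y].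
have c1 : #|[set z | z \in [:: x]]| = 1.
  by rewrite (_ : [set z | z \in [:: x]] = [set x]) ?cards1 //; apply/setP => z; rewrite !inE.
have hR : 0 < #|R| by rewrite card_gt0; apply/set0Pn; exists x; rewrite inE connect0.
have ht : #|[set z | z \in [:: x]]| + #|R|.-1 <= #|R| by rewrite c1; lia.
have [p [h1 h2 h3 h4 h5]] := grow (@rF_sym F) (p0 := [::]) (x := x) isT erefl ht.
have VR : [set z | z \in x :: p] = R.
  apply/eqP; rewrite eqEcard h4 c1 add1n (prednK hR) leqnn andbT.
  by apply/subsetP => z; rewrite !inE => hz; apply: (path_connect h1).
have SV : {subset S <= x :: p}.
  move=> z hz; have : z \in R.
    rewrite inE; case/and3P: hcs => /subsetP hSU _ /forall_inP /(_ x hxU) /forall_inP.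
    by apply; apply: hSU.
  by rewrite -VR inE.
have hpe : path e x p by apply: sub_path h1 => a b /(rF_e hcs) [].
have := tsp_walk hpe h2 SV; rewrite h5 -hF add0n => h.
apply: leq_trans h _; have := card_comp F x; rewrite -/R; lia.
Qed.


Lemma first_repeat (s : seq T) : ~~ uniq s ->
  exists A y M B, s = A ++ y :: M ++ y :: B /\ uniq (y :: M).
Proof.
elim/last_ind: s => [|s z IH] //.
rewrite rcons_uniq negb_and negbK; case hu: (uniq s); last first.
  move=> _; have [A [y [M [B [-> h]]]]] := IH (negbT hu).
  by exists A, y, M, (rcons B z); rewrite !rcons_cat /= rcons_cat.
rewrite orbF => hz; case/splitPr: hz hu => A M hu.
exists A, z, M, [::]; split; first by rewrite rcons_cat /= -cats1.
by move: hu; rewrite cat_uniq => /and3P[_ _].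
Qed.

Definition acyc_upto (L : nat) := forall c : seq T, 3 <= size c -> size c <= L -> ~~ (cycle e c && uniq c).

Lemma walk_repeat x p : path e x p -> last x p = x -> p != [::] ->
  (exists p1 b p2, p = p1 ++ b :: last x p1 :: p2) \/
  (exists c : seq T, [/\ 3 <= size c, size c <= size p, cycle e c & uniq c]).
Proof.
move=> hp hl hn.
have hnu : ~~ uniq (x :: p).
  apply/negP => /= /andP[/negP hx _]; apply: hx.
  by case: p hp hl hn => //= y p _ <- _; rewrite -/(last y p) mem_last.
have [A [y [M [B [hs hu]]]]] := first_repeat hnu.
have hsort : path e y (M ++ y :: B).
  have : sorted e (x :: p) by [].
  by rewrite hs => /cat_sorted2 [_].
have hc : cycle e (y :: M).
  by move: hsort; rewrite cat_path /= rcons_path => /and3P[-> -> _].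
case: M hs hu hsort hc => [|b [|b' M]] hs hu hsort hc.
- by move: hc; rewrite /= eirr.
- left; case: A hs => [|x' A] /= [-> ->].
    by exists [::], b, B.
  by exists (rcons A y), b, B; rewrite last_rcons -cats1 -catA.
- right; exists [:: y, b, b' & M]; split => //.
  have : size (x :: p) = size (A ++ [:: y, b, b' & M] ++ y :: B) by rewrite hs.
  rewrite /= !size_cat /= !size_cat /=; lia.
Qed.

Lemma walk_edges_bound L : acyc_upto L -> forall x p, size p <= L -> path e x p ->
  last x p = x -> 2 * #|we x p| <= size p.
Proof.
move=> hac; suff: forall n x p, size p <= n -> size p <= L -> path e x p ->
  last x p = x -> 2 * #|we x p| <= size p by move=> h x p; exact: h.
elim=> [|n IH] x p hn hL hp hl.
  by case: p hn {hL hp hl} => // _; rewrite we_nil cards0.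
case: (eqVneq p [::]) => [-> | hne]; first by rewrite we_nil cards0.
case: (walk_repeat hp hl hne) => [[p1 [b [p2 hpe]]] | [c [h1 h2 h3 h4]]]; last first.
  by have := hac c h1 (leq_trans h2 hL); rewrite h3 h4.
subst p; set a := last x p1.
move: hp; rewrite cat_path /= => /andP[hp1 /and3P[hab hba hp2]].
have hp' : path e x (p1 ++ p2) by rewrite cat_path hp1.
have hl' : last x (p1 ++ p2) = x by move: hl; rewrite !last_cat.
have hs : size (p1 ++ p2) <= n by move: hn; rewrite !size_cat /=; lia.
have hsL : size (p1 ++ p2) <= L by move: hL; rewrite !size_cat /=; lia.
have := IH x (p1 ++ p2) hs hsL hp' hl'.
have hsub : we x (p1 ++ b :: a :: p2) \subset [set a; b] |: we x (p1 ++ p2).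
  rewrite !we_cat !we_cons -/a; apply/subsetP => f; rewrite !inE.
  by case/orP=> [->|/orP[->|/orP[/eqP->|->]]]; rewrite ?orbT ?eqxx //= set2C' eqxx ?orbT.
have := subset_leq_card hsub; rewrite cardsU1 !size_cat /=.
case: (_ \notin _) => /=; lia.
Qed.


Lemma mem_pre x p q z : z \in x :: p -> z \in x :: (p ++ q).
Proof. by rewrite !in_cons mem_cat => /orP[->|->]; rewrite ?orbT. Qed.

Lemma mem_suf x p q z : z \in last x p :: q -> z \in x :: (p ++ q).
Proof.
rewrite in_cons => /orP[/eqP -> | h].
  by apply: mem_pre; exact: mem_last.
by rewrite in_cons mem_cat h !orbT.
Qed.

Lemma tree_tsp (S : {set T}) x0 : (forall c : seq T, 3 <= size c -> ~~ (cycle e c && uniq c)) ->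
  2 * steiner e S <= tsp e S.
Proof.
move=> ht; have [x [p [h1 h2 h3 h4]]] := tsp_attained S x0.
rewrite -h4; apply: leq_trans (_ : 2 * #|we x p| <= _).
  by rewrite leq_mul2l (steiner_walk h1 h3) orbT.
apply: (@walk_edges_bound (size p)) => // c hc _; exact: ht.
Qed.

Lemma rotate_walk x p u : path e x p -> last x p = x -> u \in x :: p ->
  exists p', [/\ path e u p', last u p' = u, size p' = size p & {subset x :: p <= u :: p'}].
Proof.
move=> hp hl hu; case/splitPl: hu hp hl => p1 p2 hl1.
rewrite cat_path last_cat hl1 => /andP[hp1 hp2] hl2.
exists (p2 ++ p1); split.
- by rewrite cat_path hp2 hl2 hp1.
- by rewrite last_cat hl2 hl1.
- by rewrite !size_cat addnC.
move=> z; rewrite in_cons mem_cat => /orP[/eqP -> | /orP[hz|hz]].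
- by apply: mem_pre; rewrite -hl2 mem_last.
- by rewrite in_cons mem_cat hz !orbT.
- by apply: mem_pre; rewrite in_cons hz orbT.
Qed.

Lemma closed_tri u p v w : path e u p -> last u p = u -> v \in u :: p -> w \in u :: p ->
  d u v + d v w + d w u <= size p.
Proof.
move=> hp hl hv hw; case/splitPl: hv hp hl hw => p1 p2 hl1.
rewrite cat_path last_cat hl1 => /andP[hp1 hp2] hl2.
rewrite in_cons mem_cat size_cat => hw.
have e1 := dist_le' hp1 hl1; have e2 := dist_le' hp2 hl2.
have [hw1 | hw2] : w \in u :: p1 \/ w \in v :: p2.
  case/orP: hw => [h|/orP[h|h]]; first by left; rewrite in_cons h.
    by left; rewrite in_cons h orbT.
  by right; rewrite in_cons h orbT.
- case/splitPl: hw1 hp1 hl1 e1 => q1 q2 hq1.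
  rewrite cat_path last_cat hq1 size_cat => /andP[k1 k2] k3 _.
  have f1 := dist_le' k1 hq1; have f2 := dist_le' k2 k3.
  have := dist_sym u v; have := dist_sym v w; have := dist_sym w u; lia.
- case/splitPl: hw2 hp2 hl2 e2 => q1 q2 hq1.
  rewrite cat_path last_cat hq1 size_cat => /andP[k1 k2] k3 _.
  have f1 := dist_le' k1 hq1; have f2 := dist_le' k2 k3.
  lia.
Qed.

Lemma tsp_tri (S : {set T}) u v w : u \in S -> v \in S -> w \in S ->
  d u v + d v w + d w u <= tsp e S.
Proof.
move=> hu hv hw; have [x [p [h1 h2 h3 h4]]] := tsp_attained S u.
have [p' [k1 k2 k3 k4]] := rotate_walk h1 h2 (h3 u hu).
rewrite -h4 -k3; apply: closed_tri => //; apply: k4; exact: h3.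
Qed.

Lemma tsp_tri_le (S : {set T}) u v w : {subset S <= [:: u; v; w]} ->
  tsp e S <= d u v + d v w + d w u.
Proof.
move=> hS.
have [pa [a1 a2 a3]] := dist_attained u v.
have [pb [b1 b2 b3]] := dist_attained v w.
have [pc [c1 c2 c3]] := dist_attained w u.
rewrite -a3 -b3 -c3 -!size_cat -catA; apply: (@tsp_walk _ u).
- by rewrite !cat_path a1 a2 b1 b2 c1.
- by rewrite !last_cat a2 b2 c2.
move=> z /hS hz; rewrite !inE in hz; case/or3P: hz => /eqP ->.
- exact: mem_head.
- by apply: mem_suf; rewrite a2 mem_head.
- by rewrite catA; apply: mem_suf; rewrite last_cat a2 b2 mem_head.
Qed.

Lemma steiner_pair (S : {set T}) u v : {subset S <= [:: u; v]} -> steiner e S <= d u v.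
Proof.
move=> hS; have [pa [a1 a2 a3]] := dist_attained u v.
rewrite -a3; apply: leq_trans (card_we u pa); apply: steiner_walk => // z /hS hz.
rewrite !inE in hz; case/orP: hz => /eqP ->; first exact: mem_head.
by rewrite -a2 mem_last.
Qed.

Lemma there_back x q : path e x q ->
  [/\ path e x (q ++ rev (belast x q)), last x (q ++ rev (belast x q)) = x,
      size (q ++ rev (belast x q)) = 2 * size q &
      we x (q ++ rev (belast x q)) = we x q].
Proof.
move=> hq; have [r1 r2] := rev_walk hq; split.
- by rewrite cat_path hq r1.
- by rewrite last_cat r2.
- by rewrite size_cat size_rev_belast; lia.
- by rewrite we_cat we_rev setUid.
Qed.

Lemma leq_cardU (X : finType) (A B : {set X}) : #|A :|: B| <= #|A| + #|B|.
Proof. by rewrite cardsU leq_subr. Qed.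

Lemma steiner_med (S : {set T}) u v w m : {subset S <= [:: u; v; w]} ->
  steiner e S <= d u m + d v m + d w m.
Proof.
move=> hS.
have [qu [a1 a2 a3]] := dist_attained m u.
have [qv [b1 b2 b3]] := dist_attained m v.
have [qw [c1 c2 c3]] := dist_attained m w.
have [t1 t2 _ t4] := there_back a1.
have [s1 s2 _ s4] := there_back b1.
have t5 : u \in m :: (qu ++ rev (belast m qu)) by apply: mem_pre; rewrite -a2 mem_last.
have s5 : v \in m :: (qv ++ rev (belast m qv)) by apply: mem_pre; rewrite -b2 mem_last.
move: (qu ++ rev (belast m qu)) t1 t2 t4 t5 => Wu t1 t2 t4 t5.
move: (qv ++ rev (belast m qv)) s1 s2 s4 s5 => Wv s1 s2 s4 s5.
have hp : path e m (Wu ++ Wv ++ qw) by rewrite !cat_path t1 t2 s1 s2 c1.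
apply: (@leq_trans #|we m (Wu ++ Wv ++ qw)|).
  apply: steiner_walk => // z /hS hz; rewrite !inE in hz; case/or3P: hz => /eqP ->.
  - by apply: mem_pre.
  - by apply: mem_suf; rewrite t2; apply: mem_pre.
  - by rewrite catA; apply: mem_suf; rewrite last_cat t2 s2 -c2 mem_last.
rewrite !we_cat t2 s2 t4 s4.
have := leq_cardU (we m qu) (we m qv :|: we m qw).
rewrite (dist_sym u) (dist_sym v) (dist_sym w) -a3 -b3 -c3.
have := card_we m qu; have := card_we m qv; have := card_we m qw.
have := leq_cardU (we m qv) (we m qw); lia.
Qed.


Lemma uniq_conn (r : rel T) x y : connect r x y ->
  exists p : seq T, [/\ path r x p, last x p = y & uniq (x :: p)].
Proof.
move/connectP=> [p hp ->].
case: (shortenP hp) => p' h1 h2 _; by exists p'.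
Qed.

Lemma we_path_sub (F : {set {set T}}) x p : path (rF F) x p -> we x p \subset F.
Proof.
elim: p x => [|y p IH] x /=; first by rewrite we_nil sub0set.
case/andP=> hxy hp; rewrite we_cons subUset sub1set; apply/andP; split; [exact: hxy | exact: IH].
Qed.

Lemma first_hit (V : {set T}) w q : w \notin V -> last w q \in V ->
  exists q1 m q2, [/\ q = rcons q1 m ++ q2, m \in V & forall z, z \in w :: q1 -> z \notin V].
Proof.
elim: q w => [|y q IH] w /=; first by move=> /negPf ->.
move=> hw hl; case hy: (y \in V).
  exists [::], y, q; split => // z; rewrite inE => /eqP ->; exact: hw.
have [q1 [m [q2 [-> h2 h3]]]] := IH y (negbT hy) hl.
exists (y :: q1), m, q2; split => // z; rewrite in_cons => /orP[/eqP -> // | /h3 //].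
Qed.

Lemma we_rcons_out w q m f : f \in we w (rcons q m) -> exists2 z, z \in f & z \in w :: q.
Proof.
elim: q w => [|y q IH] w /=.
  by rewrite we_cons we_nil setU0 inE => /eqP ->; exists w; rewrite !inE eqxx.
rewrite we_cons => /setU1P[-> | /IH [z h1 h2]].
  by exists w; rewrite !inE eqxx.
by exists z => //; rewrite in_cons h2 orbT.
Qed.

Lemma cards_disjU (X : finType) (A B : {set X}) : A :&: B = set0 -> #|A :|: B| = #|A| + #|B|.
Proof. by move=> h; rewrite cardsU h cards0 subn0. Qed.

Lemma conn_U (S U : {set T}) F a b : conn_subgraph_containing e S U F -> a \in U -> b \in U ->
  connect (rF F) a b.
Proof. by case/and3P => _ _ /forall_inP h ha hb; move: (h a ha) => /forall_inP /(_ b hb). Qed.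

Lemma steiner3 (S U : {set T}) F u v w : conn_subgraph_containing e S U F ->
  u \in S -> v \in S -> w \in S -> exists m, d u m + d v m + d w m <= #|F|.
Proof.
move=> hc hu hv hw.
have hSU : S \subset U by case/and3P: hc.
have [hu' hv' hw'] : [/\ u \in U, v \in U & w \in U] by rewrite !(subsetP hSU).
have rE : forall a b, rF F a b -> e a b by move=> a b /(rF_e hc) [].
have [P [hP hlP huP]] := uniq_conn (conn_U hc hu' hv').
have [Q0 [hQ hlQ huQ]] := uniq_conn (conn_U hc hw' hu').
have hPe := sub_path rE hP.
have cP := card_we_uniq huP.
have sP := we_path_sub hP.
set V := [set z | z \in u :: P].
case hwV : (w \in V).
  exists w; rewrite dist_xx addn0.
  move: hwV; rewrite inE => hwP; case/splitPl: hwP hPe hlP cP sP => P1 P2 hl1.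
  rewrite cat_path last_cat hl1 => /andP[k1 k2] k3 cP sP.
  have := dist_le' k1 hl1; have := dist_le' k2 k3; have := subset_leq_card sP.
  rewrite cP size_cat (dist_sym v w) => h1 h2 h3; clear -h1 h2 h3; lia.
have hlV : last w Q0 \in V by rewrite hlQ inE mem_head.
have [q1 [m [q2 [hQ0 hmV hout]]]] := first_hit (negbT hwV) hlV.
subst Q0; move: hQ huQ; rewrite cat_path -cat_cons cat_uniq => /andP[hQ _] /and3P[huQ _ _].
have hQe := sub_path rE hQ.
have cQ := card_we_uniq huQ.
have sQ := we_path_sub hQ.
have dwm : d w m <= size (rcons q1 m) by apply: dist_le' hQe _; rewrite last_rcons.
have hdisj : we u P :&: we w (rcons q1 m) = set0.
  apply/setP => f; rewrite !inE; apply/negP => /andP[h1 /we_rcons_out [z hz1 hz2]].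
  by move: (hout z hz2); rewrite inE (we_sub h1 hz1).
have hsub : we u P :|: we w (rcons q1 m) \subset F by rewrite subUset sP sQ.
have := subset_leq_card hsub; rewrite (cards_disjU hdisj) cP cQ => hF.
exists m; move: hmV; rewrite inE => hmP.
case/splitPl: hmP hPe hlP hF => P1 P2 hl1.
rewrite cat_path last_cat hl1 => /andP[k1 k2] k3 hF.
have := dist_le' k1 hl1; have := dist_le' k2 k3.
rewrite size_cat in hF; rewrite (dist_sym v m) => h1 h2; clear -h1 h2 hF dwm; rewrite size_rcons in dwm hF; lia.
Qed.


Lemma steiner_ge_card (S : {set T}) x : x \in S -> #|S| <= steiner e S + 1.
Proof.
move=> hx; have [U [F [hc hF]]] := steiner_attained S.
have hSU : S \subset U by case/and3P: hc.
have hxU : x \in U by rewrite (subsetP hSU).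
have : S \subset [set y | connect (rF F) x y].
  apply/subsetP => z hz; rewrite inE; apply: (conn_U hc hxU); exact: (subsetP hSU).
move/subset_leq_card => h; have := card_comp F x; rewrite hF => h'.
exact: leq_trans h h'.
Qed.

Lemma ex_common (X : finType) (A B : {set X}) : ~~ [disjoint A & B] -> exists f, f \in A /\ f \in B.
Proof. by move/pred0Pn => [f /andP[h1 h2]]; exists f. Qed.

Lemma share a z b pA pB : path e a pA -> last a pA = z -> size pA = d a z ->
  path e z pB -> last z pB = b -> size pB = d z b ->
  ~~ [disjoint we a pA & we z pB] ->
  exists c, [/\ 1 <= d z c, d a c + d c z = d a z & d z c + d c b = d z b].
Proof.
move=> hA hlA hsA hB hlB hsB /ex_common [f [/mem_we [p1 [s [p2 [ePA hf1]]]]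
  /mem_we [q1 [s' [q2 [ePB hf2]]]]]].
subst pA pB; set al := last a p1; set be := last z q1.
move: hA hlA hsA; rewrite cat_path last_cat /= -/al => /and3P[hp1 has hp2] hlA hsA.
move: hB hlB hsB; rewrite cat_path last_cat /= -/be => /and3P[hq1 hbs hq2] hlB hsB.
have A1 : d a al <= size p1 by apply: dist_le' hp1 _.
have A2 : d al z <= (size p2).+1 by apply: (@dist_le' al z (s :: p2)); rewrite /= ?has.
have A3 : d s z <= size p2 by apply: dist_le' hp2 _.
have A4 := dist_edge has.
have B1 : d z be <= size q1 by apply: dist_le' hq1 _.
have B2 : d be b <= (size q2).+1 by apply: (@dist_le' be b (s' :: q2)); rewrite /= ?hbs.
have B3 : d s' b <= size q2 by apply: dist_le' hq2 _.
have B4 := dist_edge hbs.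
rewrite size_cat /= in hsA; rewrite size_cat /= in hsB.
have T1 := dist_tri a al z; have T2 := dist_tri a s z; have T3 := dist_tri a al s.
have T4 := dist_tri z be b; have T5 := dist_tri z s' b; have T6 := dist_tri z be s'.
have hf : [set al; s] = [set be; s'] by rewrite /al /be -hf1 -hf2.
case: (set2_eq hf) => -[E1 E2].
- exfalso; rewrite -E1 -E2 in B1 B2 B3 B4 T4 T5 T6.
  have S1 := dist_sym z al; have S2 := dist_sym z s.
  clear -A1 A2 A3 A4 B1 B2 B3 B4 T1 T2 T3 T4 T5 T6 S1 S2 hsA hsB; lia.
- exists al; rewrite -E2 in B1 B2 T4 T6; rewrite -E1 in B3 B4 T5 T6 *.
  have S1 := dist_sym z al; have S2 := dist_sym z s; have T7 := dist_tri a al z.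
  have T8 := dist_tri z al b.
  clear -A1 A2 A3 A4 B1 B2 B3 B4 T1 T2 T3 T4 T5 T6 S1 S2 hsA hsB T7 T8; split; lia.
Qed.


Definition med u v w m := 2 * (d u m + d v m + d w m) <= d u v + d v w + d w u.

Lemma med_rot u v w m : med v w u m -> med u v w m.
Proof. rewrite /med => h; clear -h; lia. Qed.

Lemma med_reduce a z b c m : 1 <= d z c -> d a c + d c z = d a z -> d z c + d c b = d z b ->
  med a c b m -> med a z b m.
Proof.
rewrite /med => h1 h2 h3 h4.
have t1 := dist_tri z c m; have s1 := dist_sym c z; have s2 := dist_sym m z.
clear -h1 h2 h3 h4 t1 s1 s2; lia.
Qed.

Lemma med_notbad u v w m : med u v w m -> ~ bad_triple e u v w.
Proof.
rewrite /med => hm [hb1 hb2].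
have t1 := dist_tri u m v; have t2 := dist_tri v m w; have t3 := dist_tri w m u.
have s1 := dist_sym m u; have s2 := dist_sym m v; have s3 := dist_sym m w.
have s4 := dist_sym u w.
have apos : 0 < d u m.
  rewrite lt0n; apply/eqP => h0; clear -hm hb1 t1 t2 t3 s1 s2 s3 s4 h0; lia.
have bpos : 0 < d v m.
  rewrite lt0n; apply/eqP => h0; clear -hm hb1 t1 t2 t3 s1 s2 s3 s4 h0; lia.
have cpos : 0 < d w m.
  rewrite lt0n; apply/eqP => h0; clear -hm hb1 t1 t2 t3 s1 s2 s3 s4 h0; lia.
have E1 : d u v = d m u + d m v by clear -hm t1 t2 t3 s1 s2 s3; lia.
have E2 : d v w = d m v + d m w by clear -hm t1 t2 t3 s1 s2 s3; lia.
have E3 : d w u = d m w + d m u by clear -hm t1 t2 t3 s1 s2 s3; lia.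
have [qu [a1 a2 a3]] := dist_attained m u.
have [qv [b1 b2 b3]] := dist_attained m v.
have [qw [c1 c2 c3]] := dist_attained m w.
have [ru1 ru2] := rev_walk a1; rewrite a2 in ru1 ru2.
have [rv1 rv2] := rev_walk b1; rewrite b2 in rv1 rv2.
have [rw1 rw2] := rev_walk c1; rewrite c2 in rw1 rw2.
have H1 : shortest_path e u v (rev (belast m qu) ++ qv).
  split; first by rewrite cat_path ru1 ru2 b1.
    by rewrite last_cat ru2 b2.
  by rewrite size_cat size_rev_belast a3 b3 E1.
have H2 : shortest_path e v w (rev (belast m qv) ++ qw).
  split; first by rewrite cat_path rv1 rv2 c1.
    by rewrite last_cat rv2 c2.
  by rewrite size_cat size_rev_belast b3 c3 E2.
have H3 : shortest_path e w u (rev (belast m qw) ++ qu).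
  split; first by rewrite cat_path rw1 rw2 a1.
    by rewrite last_cat rw2 a2.
  by rewrite size_cat size_rev_belast c3 a3 E3.
have [D1 _ _] := hb2 _ _ _ H1 H2 H3.
case: qv b1 b2 b3 rv1 rv2 H1 H2 D1 => [|y qv] b1 b2 b3 rv1 rv2 H1 H2 D1.
  by move: b3; rewrite /= s2 => h; rewrite -h in bpos.
have f1 : [set m; y] \in we u (rev (belast m qu) ++ y :: qv).
  by rewrite we_cat ru2 we_cons in_setU in_setU1 eqxx orbT.
have f2 : [set m; y] \in we v (rev (belast m (y :: qv)) ++ qw).
  have := we_rev m (y :: qv); rewrite b2 => WR.
  by rewrite we_cat WR we_cons in_setU in_setU1 eqxx.
by rewrite (disjointFr D1 f1) in f2.
Qed.

Lemma median_exists : ~ (exists u v w, bad_triple e u v w) -> forall u v w, exists m, med u v w m.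
Proof.
move=> nb; suff: forall N u v w, d u v + d v w + d w u < N -> exists m, med u v w m.
  by move=> h u v w; exact: h _ u v w (ltnSn _).
elim=> [//|N IH] u v w hN.
have s1 := dist_sym u v; have s2 := dist_sym v w; have s3 := dist_sym w u.
case hmax: (2 * maxn (d u v) (maxn (d u w) (d v w)) < d u v + d u w + d v w); last first.
  move/negbT: hmax; rewrite -leqNgt => hmax.
  have z1 := dist_xx u; have z2 := dist_xx v; have z3 := dist_xx w.
  case: (leqP (d v w + d w u) (d u v)) => h1.
    exists w; rewrite /med; clear -h1 s1 s2 s3 z1 z2 z3; lia.
  case: (leqP (d u v + d w u) (d v w)) => h2.
    exists u; rewrite /med; clear -h2 s1 s2 s3 z1 z2 z3; lia.
  exists v; rewrite /med; clear -h1 h2 hmax s1 s2 s3 z1 z2 z3; lia.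
have nall : ~ (forall p1 p2 p3, shortest_path e u v p1 -> shortest_path e v w p2 ->
    shortest_path e w u p3 ->
    [/\ [disjoint we u p1 & we v p2], [disjoint we v p2 & we w p3] &
        [disjoint we u p1 & we w p3]]).
  by move=> h; apply: nb; exists u, v, w; split.
case: (not_all_ex_not _ _ nall) => p1 Hp1.
case: (not_all_ex_not _ _ Hp1) => p2 Hp2.
case: (not_all_ex_not _ _ Hp2) => p3 H.
case: (imply_to_and _ _ H) => H1 H'.
case: (imply_to_and _ _ H') => H2 H''.
case: (imply_to_and _ _ H'') => H3 H4.
case: H1 => [k1 k2 k3]; case: H2 => [l1 l2 l3]; case: H3 => [m1 m2 m3].
case: (boolP [disjoint we u p1 & we v p2]) => D1; last first.
  have [c [c1 c2 c3]] := share k1 k2 k3 l1 l2 l3 D1.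
  have [m hm] : exists m, med u c w m.
    apply: IH; have := dist_sym c v; clear -c1 c2 c3 hN s1 s2 s3; lia.
  by exists m; exact: (med_reduce c1 c2 c3 hm).
case: (boolP [disjoint we v p2 & we w p3]) => D2; last first.
  have [c [c1 c2 c3]] := share l1 l2 l3 m1 m2 m3 D2.
  have [m hm] : exists m, med v c u m.
    apply: IH; have := dist_sym c w; clear -c1 c2 c3 hN s1 s2 s3; lia.
  by exists m; apply: med_rot; exact: (med_reduce c1 c2 c3 hm).
case: (boolP [disjoint we u p1 & we w p3]) => D3; last first.
  rewrite disjoint_sym in D3.
  have [c [c1 c2 c3]] := share m1 m2 m3 k1 k2 k3 D3.
  have [m hm] : exists m, med w c v m.
    apply: IH; have := dist_sym c u; clear -c1 c2 c3 hN s1 s2 s3; lia.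
  by exists m; apply: med_rot; apply: med_rot; exact: (med_reduce c1 c2 c3 hm).
by exfalso; apply: H4.
Qed.


Lemma card_U_le (S U : {set T}) F x : conn_subgraph_containing e S U F -> x \in U ->
  #|U| <= #|F| + 1.
Proof.
move=> hc hx; have : U \subset [set y | connect (rF F) x y].
  by apply/subsetP => z hz; rewrite inE; apply: (conn_U hc hx).
move/subset_leq_card => h; exact: leq_trans h (card_comp F x).
Qed.

Lemma rpath_U (S U : {set T}) F x p : conn_subgraph_containing e S U F ->
  path (rF F) x p -> x \in U -> {subset x :: p <= U}.
Proof.
move=> hc; elim: p x => [|y p IH] x /=.
  by move=> _ hx z; rewrite inE => /eqP ->.
case/andP=> hxy hp hx z; rewrite in_cons => /orP[/eqP -> // | hz].
have [_ [_ hy]] := rF_e hc hxy.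
by apply: (IH y hp hy); exact: hz.
Qed.

Lemma near_head x P z y : path e x P -> last x P = z -> size P <= d x z ->
  y \in x :: P -> y != x -> d x y <= 1 -> exists P', P = y :: P'.
Proof.
move=> hp hl hs hy hyx hxy; case/splitPl: hy hp hl hs hyx => P1 P2 hl1.
rewrite cat_path last_cat hl1 size_cat => /andP[_ hp2] hl2 hs hyx.
have h1 := dist_le' hp2 hl2; have h2 := dist_tri x y z.
case: P1 hl1 hs => [|y1 [|y2 P1]] /= hl1 hs.
- by rewrite hl1 eqxx in hyx.
- by exists P2; rewrite hl1.
- exfalso; clear -h1 h2 hs hxy; lia.
Qed.

Lemma extend_set (A B : {set T}) : A \subset B -> forall t, #|A| + t <= #|B| ->
  exists S : {set T}, [/\ A \subset S, S \subset B & #|S| = #|A| + t].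
Proof.
move=> hAB; elim=> [|t IH] ht; first by exists A; rewrite addn0 subxx.
have ht' : #|A| + t <= #|B| by apply: leq_trans ht; rewrite addnS.
have [S [h1 h2 h3]] := IH ht'.
have [b hbB hbS] : exists2 b, b \in B & b \notin S.
  apply/exists_inP; rewrite -negb_forall_in; apply/negP => /forall_inP hall.
  have : B \subset S by apply/subsetP => z /hall.
  move/subset_leq_card; rewrite h3 => h; clear -h ht; lia.
exists (b |: S); split.
- exact: subset_trans h1 (subsetUr _ _).
- by rewrite subUset sub1set hbB h2.
- by rewrite cardsU1 hbS h3 addnS.
Qed.


Lemma shortest_cycle : (exists c : seq T, 3 <= size c /\ cycle e c && uniq c) ->
  exists C : seq T, [/\ 3 <= size C, cycle e C, uniq C &
    forall c : seq T, 3 <= size c -> cycle e c -> uniq c -> size C <= size c].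
Proof.
case=> c0 [hs0 /andP[hc0 hu0]].
have hex : exists n, [exists c : n.-tuple T, (3 <= n) && cycle e c && uniq c].
  by exists (size c0); apply/existsP; exists (in_tuple c0); rewrite hs0 hc0 hu0.
case: (ex_minnP hex) => g /existsP [c /andP[/andP[h1 h2] h3]] hmin.
exists (val c); rewrite size_tuple; split => // c' k1 k2 k3.
by apply: hmin; apply/existsP; exists (in_tuple c'); rewrite k1 k2 k3.
Qed.

Lemma isometric c0 C' h : uniq (c0 :: C') -> path e c0 C' ->
  (forall c : seq T, 3 <= size c -> cycle e c -> uniq c -> (size C').+1 <= size c) ->
  2 * h <= (size C').+1 -> h <= size C' -> h <= d c0 (last c0 (take h C')).
Proof.
move=> hu hp hmin h2 h1; rewrite leqNgt; apply/negP => hlt.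
set A := take h C'; set ch := last c0 A.
have {}hlt : d c0 ch < h by [].
have pA : path e c0 A by move: hp; rewrite -(cat_take_drop h C') cat_path => /andP[].
have uA : uniq (c0 :: A).
  by move: hu; rewrite -(cat_take_drop h C') -cat_cons cat_uniq => /andP[].
have sA : size A = h by rewrite /A size_take; case: (ltnP h (size C')) => // h3; apply/eqP; rewrite eqn_leq h1 h3.
have [Pg [g1 g2 g3]] := dist_attained c0 ch.
have [r1 r2] := rev_walk g1; rewrite g2 in r1 r2.
have pW : path e c0 (A ++ rev (belast c0 Pg)) by rewrite cat_path pA r1.
have lW : last c0 (A ++ rev (belast c0 Pg)) = c0 by rewrite last_cat r2.
have sW : size (A ++ rev (belast c0 Pg)) = h + d c0 ch by rewrite size_cat size_rev_belast sA g3.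
have hac : acyc_upto (h + d c0 ch).
  move=> c k1 k2; apply/negP => /andP[k3 k4]; have := hmin c k1 k3 k4.
  clear -k2 h2 hlt; lia.
have := walk_edges_bound hac (eq_leq sW) pW lW.
have : we c0 A \subset we c0 (A ++ rev (belast c0 Pg)) by rewrite we_cat subsetUl.
move/subset_leq_card; rewrite (card_we_uniq uA) sA sW => k1 k2.
clear -k1 k2 hlt; lia.
Qed.


Lemma nontree_strict k : (exists c : seq T, 3 <= size c /\ cycle e c && uniq c) ->
  4 <= k -> k <= #|T| -> exists S : {set T}, #|S| = k /\ tsp e S < 2 * steiner e S.
Proof.
move=> hc hk hkn; have [C [hs hcyc hu hmin]] := shortest_cycle hc.
case: C hs hcyc hu hmin => [//|c0 C'] /= hs hcyc hu hmin.
have hcl : last c0 (rcons C' c0) = c0 by rewrite last_rcons.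
have hV0 : #|[set z | z \in c0 :: rcons C' c0]| = (size C').+1.
  have -> : [set z | z \in c0 :: rcons C' c0] = [set z | z \in c0 :: C'].
    apply/setP => z; rewrite !in_set !in_cons mem_rcons in_cons.
    by case: (z == c0).
  by rewrite cardsE; apply/card_uniqP.
have hR : [set y | connect e c0 y] = setT by apply/setP => y; rewrite !inE econn.
case: (leqP (size C').+1 k) => hgk.
  have ht : #|[set z | z \in c0 :: rcons C' c0]| + (k - (size C').+1) <= #|[set y | connect e c0 y]|.
    by rewrite hR cardsT hV0; clear -hgk hkn; lia.
  have [p [h1 h2 h3 h4 h5]] := grow esym hcyc hcl ht.
  exists [set z | z \in c0 :: p]; split.
    by rewrite h4 hV0; clear -hgk; lia.
  have t1 : tsp e [set z | z \in c0 :: p] <= size p.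
    by apply: tsp_walk h1 h2 _ => z; rewrite inE.
  have hc0 : c0 \in [set z | z \in c0 :: p] by rewrite inE mem_head.
  have t2 := steiner_ge_card hc0.
  rewrite h4 hV0 in t2; rewrite h5 size_rcons in t1.
  clear -t1 t2 hgk hs; lia.
move: hcyc; rewrite rcons_path => /andP[pC' ecl].
case: C' hs hu hmin hcl hV0 hgk pC' ecl => [|c1 C''] hs hu hmin hcl hV0 hgk pC' ecl.
  by clear -hgk hk; simpl in hgk; lia.
set g := (size C'').+2.
have hg5 : 5 <= g by rewrite /g; simpl in hgk; clear -hgk hk; lia.
set cg := last c0 (c1 :: C'').
set h := g %/ 2.
have h2 : 2 * h <= (size (c1 :: C'')).+1 by rewrite /h /=; clear; lia.
have h1 : h <= size (c1 :: C'') by rewrite /h /=; clear -hg5; rewrite /g in hg5 *; lia.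
have hg2 : g <= 2 * h + 1 by rewrite /h; clear; lia.
set ch := last c0 (take h (c1 :: C'')).
have iso : h <= d c0 ch by apply: isometric.
move: hu; rewrite [uniq _]/= => /andP[hc0 /andP[hc1 huC]].
move: pC'; rewrite [path _ _ _]/= => /andP[e01 pC''].
have hcg : cg \in C''.
  have hn : C'' != [::] by apply/eqP => E; move: hg5; rewrite /g E.
  rewrite /cg /=; move: hn; case: C'' {hs hmin hcl hV0 hgk huC pC'' ecl cg h h1 h2 hg2 ch iso hc0 hc1 g hg5} => // z s _.
  by rewrite /= mem_last.
have n1 : c1 != cg by apply/negP => /eqP E; rewrite E hcg in hc1.
have n0 : cg != c0.
  apply/negP => /eqP E; move: hc0; rewrite in_cons negb_or => /andP[_ /negP]; apply.
  by rewrite -E.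
have n01 : c1 != c0 by apply/negP => /eqP E; move: hc0; rewrite in_cons E eqxx.
have d1 : d c0 c1 <= 1 by apply: dist_edge.
have d2 : d c0 cg <= 1 by apply: dist_edge; rewrite esym.
set B := [set z | z \in c0 :: c1 :: C''].
have hB : #|B| = g.
  by rewrite cardsE; apply/card_uniqP; apply/and3P; split.
set A0 := [set z | z \in [:: c0; c1; cg; ch]].
have hA0 : #|A0| <= 4 by rewrite cardsE; apply: card_size.
have sAB : A0 \subset B.
  apply/subsetP => z; rewrite !inE => /or4P[] /eqP ->.
  - by rewrite eqxx.
  - by rewrite eqxx orbT.
  - by rewrite hcg !orbT.
  - have := mem_last c0 (take h (c1 :: C'')); rewrite -/ch in_cons => /orP[/eqP -> | hm].
      by rewrite eqxx.
    by have := mem_take hm; rewrite in_cons => /orP[->|->]; rewrite ?orbT.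
have ht : #|A0| + (k - #|A0|) <= #|B| by rewrite hB; clear -hA0 hk hgk; simpl in hgk; lia.
have [S [s1 s2 s3]] := extend_set sAB ht.
exists S; split; first by rewrite s3; clear -hA0 hk; lia.
have tS : tsp e S <= g.
  have := @tsp_walk S c0 (rcons (c1 :: C'') c0).
  rewrite size_rcons /= => -> //; first by rewrite rcons_path /= e01 pC'' ecl.
  move=> z /(subsetP s2); rewrite !inE mem_rcons !inE.
  by case/or3P => ->; rewrite ?orbT.
have [U [F [hcs hF]]] := steiner_attained S.
have hSU : S \subset U by case/and3P: hcs.
have inS : forall z, z \in A0 -> z \in S by move=> z /(subsetP s1).
have hc0U : c0 \in U by apply: (subsetP hSU); apply: inS; rewrite !inE eqxx.
have hchU : ch \in U by apply: (subsetP hSU); apply: inS; rewrite !inE eqxx !orbT.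
have hc1U : c1 \in U by apply: (subsetP hSU); apply: inS; rewrite !inE eqxx !orbT.
have hcgU : cg \in U by apply: (subsetP hSU); apply: inS; rewrite !inE eqxx !orbT.
have rE : forall a b, rF F a b -> e a b by move=> a b /(rF_e hcs) [].
have [P [hP hlP huP]] := uniq_conn (conn_U hcs hc0U hchU).
have hPe := sub_path rE hP.
have sP : h <= size P by apply: leq_trans iso (dist_le' hPe hlP).
have VPU : [set z | z \in c0 :: P] \subset U.
  by apply/subsetP => z; rewrite inE; apply: (rpath_U hcs hP hc0U).
have cVP : #|[set z | z \in c0 :: P]| = (size P).+1 by rewrite cardsE; apply/card_uniqP.
have cU := card_U_le hcs hc0U.
suff hU : h + 2 <= #|U|.
  rewrite -hF; clear -hU cU tS hg2; lia.
case: (leqP (h + 1) (size P)) => hsP.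
  have := subset_leq_card VPU; rewrite cVP; clear -hsP; lia.
have sP' : size P <= d c0 ch by clear -hsP iso; lia.
have [y [hyU hyP]] : exists y, y \in U /\ y \notin c0 :: P.
  case hy1 : (c1 \in c0 :: P); last by exists c1; rewrite hy1.
  case hy2 : (cg \in c0 :: P); last by exists cg; rewrite hy2.
  have [P1 E1] := near_head hPe hlP sP' hy1 n01 d1.
  have [P2 E2] := near_head hPe hlP sP' hy2 n0 d2.
  by move: n1; rewrite E1 in E2; case: E2 => ->; rewrite eqxx.
have : y |: [set z | z \in c0 :: P] \subset U by rewrite subUset sub1set hyU VPU.
move/subset_leq_card; rewrite cardsU1 cVP inE hyP /=; clear -sP; lia.
Qed.


Lemma sum_eq_iff (X : finType) (P : pred X) (a b : X -> nat) : (forall i, P i -> a i <= b i) ->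
  (\sum_(i | P i) a i = \sum_(i | P i) b i <-> forall i, P i -> a i = b i).
Proof.
move=> hle; split; last by move=> h; apply: eq_bigr.
move=> hs i hi; apply/eqP; rewrite eqn_leq hle //=.
move: hs; rewrite (bigD1 i hi) [in X in _ = X](bigD1 i hi) /= => hs.
have : \sum_(y | P y && (y != i)) a y <= \sum_(y | P y && (y != i)) b y.
  by apply: leq_sum => y /andP[hy _]; exact: hle.
clear -hs; lia.
Qed.

Lemma set3 (S : {set T}) : #|S| = 3 ->
  exists u v w, [/\ u \in S, v \in S, w \in S & {subset S <= [:: u; v; w]}].
Proof.
move=> h3; have : 0 < #|S| by rewrite h3.
rewrite card_gt0 => /set0Pn [u hu].
have : #|S :\ u| == 2 by move: h3; rewrite (cardsD1 u S) hu => /eqP; rewrite eqSS.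
case/cards2P => v [w [_ hvw]].
have hv : v \in S :\ u by rewrite hvw !inE eqxx.
have hw : w \in S :\ u by rewrite hvw !inE eqxx orbT.
exists u, v, w; split => //; first by move: hv; rewrite inE => /andP[].
  by move: hw; rewrite inE => /andP[].
move=> z hz; case: (eqVneq z u) => [->|hzu]; first by rewrite inE eqxx.
have : z \in S :\ u by rewrite in_setD1 hzu hz.
by rewrite hvw !inE => /orP[->|->]; rewrite ?orbT.
Qed.

Lemma bad_distinct u v w : bad_triple e u v w -> [/\ u != v, v != w & u != w].
Proof.
case=> hb _; split; apply/eqP => E; subst; move: hb; rewrite dist_xx;
  rewrite ?(dist_sym v u) ?(dist_sym w v) ?(dist_sym w u); lia.
Qed.

Lemma main k : 2 <= k -> k <= #|T| ->
  tsp_wiener e k <= 2 * steiner_wiener e k /\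
  (tsp_wiener e k = 2 * steiner_wiener e k <->
     [\/ k = 2,
         k = 3 /\ ~ (exists u v w : T, bad_triple e u v w)
       | 4 <= k /\ is_tree e]).
Proof.
move=> hk hkn.
have hle : forall S : {set T}, #|S| == k -> tsp e S <= 2 * steiner e S.
  move=> S /eqP hS; have : 0 < #|S| by rewrite hS; clear -hk; lia.
  by rewrite card_gt0 => /set0Pn [x hx]; exact: tsp_le_steiner hx.
rewrite /tsp_wiener /steiner_wiener big_distrr /=; split; first exact: leq_sum.
rewrite (sum_eq_iff hle); split.
  move=> heq.
  case: (ltngtP k 3) => hk3.
  - by constructor 1; clear -hk hk3; lia.
  - constructor 3; split => //; split => // c hc; apply/negP => hcu.
    have [S [hS hlt]] := nontree_strict (ex_intro _ c (conj hc hcu)) hk3 hkn.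
    by move: hlt; rewrite heq ?hS // ltnn.
  constructor 2; split => // -[u [v [w hb]]].
  have [n1 n2 n3] := bad_distinct hb.
  set S := [set u; v; w].
  have hS : #|S| = 3.
    have -> : S = [set z | z \in [:: u; v; w]] by apply/setP => z; rewrite !inE orbA.
    rewrite cardsE; apply/card_uniqP; rewrite /= !inE !negb_or n1 n2 n3.
    by [].
  have hsub : {subset S <= [:: u; v; w]} by move=> z; rewrite !inE orbA.
  have t1 := tsp_tri_le hsub.
  have [U [F [hc hF]]] := steiner_attained S.
  have hu : u \in S by rewrite !inE eqxx.
  have hv : v \in S by rewrite !inE eqxx orbT.
  have hw : w \in S by rewrite !inE eqxx !orbT.
  have [m hm] := steiner3 hc hu hv hw.
  have hmed : med u v w m.
    have hSk : #|S| == k by rewrite hS hk3.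
    rewrite /med; have := heq S hSk; rewrite -hF => E.
    clear -hm E t1; lia.
  exact: (med_notbad hmed hb).
case=> [hk2 | [hk3 hnb] | [hk4 [_ htree]]] S /eqP hS; apply/eqP; rewrite eqn_leq hle ?hS //=.
- move: hS; rewrite hk2 => /eqP /cards2P [u [v [_ huv]]].
  have hu : u \in S by rewrite huv !inE eqxx.
  have hv : v \in S by rewrite huv !inE eqxx orbT.
  have t1 := tsp_tri hu hv hv.
  have hsub : {subset S <= [:: u; v]} by move=> z; rewrite huv !inE.
  have t2 := steiner_pair hsub.
  rewrite dist_xx (dist_sym v u) in t1; clear -t1 t2; lia.
- have [u [v [w [hu hv hw hsub]]]] := set3 (etrans hS hk3).
  have t1 := tsp_tri hu hv hw.
  have [m hm] := median_exists hnb u v w.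
  have t2 := steiner_med m hsub.
  rewrite /med in hm; clear -t1 t2 hm; lia.
- have : 0 < #|S| by rewrite hS; clear -hk4; lia.
  rewrite card_gt0 => /set0Pn [x _]; exact: (tree_tsp S x htree).
Qed.

End G.

Theorem theorem1 (T : finType) (e : rel T) (k : nat) :
  simple_graph e -> connected_graph e -> 2 <= k -> k <= #|T| ->
  tsp_wiener e k <= 2 * steiner_wiener e k /\
  (tsp_wiener e k = 2 * steiner_wiener e k <->
     [\/ k = 2,
         k = 3 /\ ~ (exists u v w : T, bad_triple e u v w)
       | 4 <= k /\ is_tree e]).
Proof.
move=> [hsym hirr] hconn hk hkn.
exact: (main hsym hirr hconn hk hkn).
Qed.
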